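(* Consider $\min_u F(u)+G(u)$ under the assumptions below, with $G$ additionally convex. Let $\{(y^t,z^t,x^t)\}$ be generated by the modified PR iteration with $\gamma\in(0,\frac1{12L_F})$, and let $(\bar y,\bar z,\bar x)$ be any cluster point of this sequence. Then $\bar y=\bar z$ and $\bar z$ is a minimizer of $F+G$. Moreover, for every $N\ge1$, \[ F(\bar z^N)+G(\bar z^N)-F(\bar z)-G(\bar z)\le\frac{1}{40\gamma N L_F}\left(\frac1\gamma-5L_F\right)\|x^0-\bar x\|^2, \] where $\bar z^N:=\frac1N\sum_{t=1}^N z^t$, and \[ \min_{0\le t\le N}\|x^{t+1}-x^t\|=o\!\left(\frac{1}{\sqrt N}\right)\quad (N\to\infty). \]
   Context: Assumptions: $F:\mathbb{R}^n\to\mathbb{R}$ is convex and differentiable with $\nabla F$ Lipschitz continuous with modulus at most $L_F>0$; $G:\mathbb{R}^n\to(-\infty,\infty]$ is proper, lower semicontinuous, and $\operatorname{Argmin}_u\{\tau G(u)+\frac12\|u-w\|^2\}$ is nonempty for every $w$ and every $\tau>0$; $F+G$ is coercive. Modified PR iteration: given $x^0$ and $\gamma\in(0,\frac1{12L_F})$, for $t=0,1,\dots$: $y^{t+1}=\operatorname{argmin}_y\{F(y)+\frac{5L_F}{2}\|y\|^2+\frac1{2\gamma}\|y-x^t\|^2\}$; $z^{t+1}\in\operatorname{Argmin}_z\{G(z)-\frac{5L_F}{2}\|z\|^2+\frac1{2\gamma}\|2y^{t+1}-x^t-z\|^2\}$; $x^{t+1}=x^t+2(z^{t+1}-y^{t+1})$.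 *)

(* Defs.v *)
From Stdlib Require Import Reals.
From mathcomp Require Import ssreflect ssrbool ssrfun eqtype ssrnat seq fintype bigop.

Set Implicit Arguments.
Unset Strict Implicit.

Local Open Scope R_scope.

Definition vec (n : nat) := 'I_n -> R.

Definition vadd {n} (u v : vec n) : vec n := fun i => u i + v i.
Definition vsub {n} (u v : vec n) : vec n := fun i => u i - v i.
Definition vscal {n} (a : R) (u : vec n) : vec n := fun i => a * u i.

Definition inner {n} (u v : vec n) : R := \big[Rplus/0]_(i < n) (u i * v i).
Definition norm {n} (u : vec n) : R := sqrt (inner u u).

(** Extended reals (-oo excluded): values of proper functions R^n -> (-oo, +oo]. *)
Inductive Rbar : Type := Fin (r : R) | Pinf.

Definition Rbar_le (a b : Rbar) : Prop :=
  match a, b with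
  | _, Pinf => True
  | Pinf, Fin _ => False
  | Fin x, Fin y => x <= y
  end.

Definition Rbar_plus_R (a : Rbar) (r : R) : Rbar :=
  match a with Fin x => Fin (x + r) | Pinf => Pinf end.

Definition Rbar_scal (t : R) (a : Rbar) : Rbar :=
  match a with Fin x => Fin (t * x) | Pinf => Pinf end.

Definition is_argmin {n} (f : vec n -> Rbar) (u : vec n) : Prop :=
  forall v, Rbar_le (f u) (f v).

Definition convex {n} (F : vec n -> R) : Prop :=
  forall (x y : vec n) (l : R), 0 <= l <= 1 ->
    F (vadd (vscal l x) (vscal (1 - l) y)) <= l * F x + (1 - l) * F y.

Definition convex_ext {n} (G : vec n -> Rbar) : Prop :=
  forall (x y : vec n) (l gx gy : R), 0 <= l <= 1 ->
    G x = Fin gx -> G y = Fin gy ->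
    Rbar_le (G (vadd (vscal l x) (vscal (1 - l) y))) (Fin (l * gx + (1 - l) * gy)).

Definition is_gradient {n} (F : vec n -> R) (gradF : vec n -> vec n) : Prop :=
  forall x : vec n, forall eps, 0 < eps -> exists delta, 0 < delta /\
    forall h : vec n, norm h < delta ->
      Rabs (F (vadd x h) - F x - inner (gradF x) h) <= eps * norm h.

Definition lipschitz {n} (T : vec n -> vec n) (L : R) : Prop :=
  forall x y : vec n, norm (vsub (T x) (T y)) <= L * norm (vsub x y).

Definition proper_fun {n} (G : vec n -> Rbar) : Prop := exists x r, G x = Fin r.

Definition lsc {n} (G : vec n -> Rbar) : Prop :=
  forall (x : vec n) (a : R), ~ Rbar_le (G x) (Fin a) ->
    exists delta, 0 < delta /\
      forall y, norm (vsub y x) < delta -> ~ Rbar_le (G y) (Fin a).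

Definition coercive_sum {n} (F : vec n -> R) (G : vec n -> Rbar) : Prop :=
  forall M : R, exists R0 : R, forall x : vec n, R0 <= norm x ->
    Rbar_le (Fin M) (Rbar_plus_R (G x) (F x)).

Definition vconv {n} (u : nat -> vec n) (l : vec n) : Prop :=
  Un_cv (fun k => norm (vsub (u k) l)) 0.

Definition cluster_point3 {n} (y z x : nat -> vec n) (yb zb xb : vec n) : Prop :=
  exists phi : nat -> nat, (forall k, (phi k < phi (S k))%nat) /\
    vconv (fun k => y (phi k)) yb /\ vconv (fun k => z (phi k)) zb /\
    vconv (fun k => x (phi k)) xb.

Definition zavg {n} (z : nat -> vec n) (N : nat) : vec n :=
  fun i => / INR N * \big[Rplus/0]_(1 <= t < N.+1) z t i.

Fixpoint min_step {n} (x : nat -> vec n) (N : nat) : R :=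
  match N with
  | O => norm (vsub (x 1%nat) (x 0%nat))
  | S N' => Rmin (min_step x N') (norm (vsub (x (S N)) (x N)))
  end.

(* Main.v *)
Set Warnings "-notation-overridden,-redundant-canonical-projection".
From HB Require Import structures.
Require Import Defs.
From Stdlib Require Import Reals Lra Psatz FunctionalExtensionality Classical.
From mathcomp Require Import ssreflect ssrbool ssrfun eqtype ssrnat seq fintype bigop zify.

Local Open Scope R_scope.

Lemma Rplus_assoc' : associative Rplus. Proof. intros a b c; ring. Qed.
HB.instance Definition _ := Monoid.isComLaw.Build R 0 Rplus Rplus_assoc' Rplus_comm Rplus_0_l.

Section Vec.
Context {n : nat}.
Implicit Types u v w : vec n.
Definition nsq (u : vec n) := inner u u.

Lemma bsum_scal (a : R) (f : 'I_n -> R) :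
  \big[Rplus/0]_(i<n) (a * f i) = a * \big[Rplus/0]_(i<n) f i.
Proof.
elim/big_rec2: _ => [|i y1 y2 _ ->]; ring.
Qed.

Lemma bsum_nonneg (f : 'I_n -> R) : (forall i, 0 <= f i) -> 0 <= \big[Rplus/0]_(i<n) f i.
Proof. move=> H; elim/big_rec: _ => [|i y _ Hy]; [lra| have := H i; lra]. Qed.

Lemma inner_sym u v : inner u v = inner v u.
Proof. rewrite /inner; apply eq_bigr => i _; ring. Qed.
Lemma inner_addl u v w : inner (vadd u v) w = inner u w + inner v w.
Proof. rewrite /inner -big_split; apply eq_bigr => i _; rewrite /vadd /=; ring. Qed.
Lemma inner_addr u v w : inner w (vadd u v) = inner w u + inner w v.
Proof. rewrite /inner -big_split; apply eq_bigr => i _; rewrite /vadd /=; ring. Qed.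
Lemma inner_scall a u w : inner (vscal a u) w = a * inner u w.
Proof. rewrite /inner -bsum_scal; apply eq_bigr => i _; rewrite /vscal; ring. Qed.
Lemma inner_scalr a u w : inner w (vscal a u) = a * inner w u.
Proof. rewrite /inner -bsum_scal; apply eq_bigr => i _; rewrite /vscal; ring. Qed.

Lemma vsub_addN u v : vsub u v = vadd u (vscal (-1) v).
Proof. apply functional_extensionality => i; rewrite /vsub /vadd /vscal; ring. Qed.
Lemma inner_subl u v w : inner (vsub u v) w = inner u w - inner v w.
Proof. rewrite vsub_addN inner_addl inner_scall; ring. Qed.
Lemma inner_subr u v w : inner w (vsub u v) = inner w u - inner w v.
Proof. rewrite vsub_addN inner_addr inner_scalr; ring. Qed.

Lemma nsq_nonneg u : 0 <= nsq u.
Proof. apply bsum_nonneg => i; nra. Qed.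

Lemma nsq_eq0 u : nsq u = 0 -> u = (fun _ => 0).
Proof.
move=> H; apply functional_extensionality => i.
move: H; rewrite /nsq /inner (bigD1 i) //=.
set S := \big[_/_]_(_ < _ | _) _ => H.
have HS : 0 <= S by rewrite /S; elim/big_rec: _ => [|j y _ Hy] /=; nra.
clearbody S. have H3 : u i * u i <= 0 by lra.
have H4 : u i * u i = 0 by apply Rle_antisym; nra.
by case: (Rmult_integral _ _ H4).
Qed.

Lemma norm_sq u : norm u ^ 2 = nsq u.
Proof. rewrite /norm /= Rmult_1_r sqrt_sqrt //; apply nsq_nonneg. Qed.
Lemma norm_nonneg u : 0 <= norm u.
Proof. apply sqrt_pos. Qed.

Lemma amgm u v e : 0 < e -> 2 * inner u v <= e * nsq u + / e * nsq v.
Proof.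
move=> He.
have H := nsq_nonneg (vsub (vscal e u) v).
rewrite /nsq !inner_subl !inner_subr !inner_scall !inner_scalr (inner_sym v u) in H.
rewrite /nsq.
have He' : e * (e * inner u u + / e * inner v v - 2 * inner u v) =
   e * (e * inner u u) - e * inner u v - e * inner u v + inner v v.
  field; lra.
have : 0 <= e * (e * inner u u + / e * inner v v - 2 * inner u v) by rewrite He'; lra.
move=> H2. apply Rmult_le_reg_l with e => //. nra.
Qed.

Lemma cs_sq u v : inner u v ^ 2 <= nsq u * nsq v.
Proof.
case: (Req_dec (nsq v) 0) => Hv.
  move: (nsq_eq0 _ Hv) => E; rewrite Hv E /inner big1 /=; [|move=> i _; ring].
  nra.
have Hp : 0 < nsq v by have := nsq_nonneg v; lra.
set t := inner u v / nsq v.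
have H := nsq_nonneg (vsub u (vscal t v)).
rewrite /nsq !inner_subl !inner_subr !inner_scall !inner_scalr (inner_sym v u) in H.
rewrite -/(nsq u) -/(nsq v) in H.
have : t * t * nsq v = inner u v * t by rewrite /t; field; lra.
move=> E.
have : 0 <= nsq u - inner u v * t by nra.
rewrite /t => H1.
have : 0 <= nsq v * (nsq u - inner u v * (inner u v / nsq v)) by nra.
have -> : nsq v * (nsq u - inner u v * (inner u v / nsq v)) = nsq u * nsq v - inner u v ^2 by field; lra.
lra.
Qed.

Lemma cs u v : inner u v <= norm u * norm v.
Proof.
rewrite /norm -sqrt_mult; try apply nsq_nonneg.
apply Rle_trans with (Rabs (inner u v)); [apply Rle_abs|].
rewrite -sqrt_Rsqr_abs; apply sqrt_le_1_alt; rewrite /Rsqr -/(nsq u) -/(nsq v).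
have := cs_sq u v; simpl; nra.
Qed.

Lemma norm_scal a u : norm (vscal a u) = Rabs a * norm u.
Proof.
rewrite /norm inner_scall inner_scalr -Rmult_assoc sqrt_mult.
- by rewrite -sqrt_Rsqr_abs.
- nra.
- apply nsq_nonneg.
Qed.

Lemma nsq_norm_le u v : nsq u <= nsq v -> norm u <= norm v.
Proof. move=> H; apply sqrt_le_1_alt => //. Qed.

Lemma norm_triangle u v : norm (vadd u v) <= norm u + norm v.
Proof.
have H1 := norm_nonneg u; have H2 := norm_nonneg v.
rewrite {1}/norm -(sqrt_square (norm u + norm v)); last lra.
apply sqrt_le_1_alt.
have := cs u v.
have := norm_sq u; have := norm_sq v; rewrite /nsq /= !Rmult_1_r.
rewrite !inner_addl !inner_addr (inner_sym v u). nra.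
Qed.

Lemma vsub_self u : vsub u u = (fun _ => 0).
Proof. apply functional_extensionality => i; rewrite /vsub; ring. Qed.
Lemma norm_zero : norm (fun _ : 'I_n => 0) = 0.
Proof. rewrite /norm /inner big1 ?sqrt_0 //; move=> i _; ring. Qed.

End Vec.

Ltac expand := rewrite ?norm_sq /nsq ?vsub_addN;
  repeat progress (rewrite ?inner_addl ?inner_addr ?inner_scall ?inner_scalr).

Lemma small_l X Z : 0 <= Z -> (forall l, 0 < l <= 1 -> X <= l * Z) -> X <= 0.
Proof.
move=> HZ H.
case: (Rle_lt_dec X 0) => // HX.
pose l := Rmin 1 (X / (2 * (Z + 1))).
have Hl1 : l <= 1 by apply Rmin_l.
have Hl2 : l <= X / (2 * (Z + 1)) by apply Rmin_r.
have Hl0 : 0 < l.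
  rewrite /l; apply Rmin_glb_lt; [lra|]. apply Rdiv_lt_0_compat; lra.
have := H l (conj Hl0 Hl1).
have : l * (2 * (Z + 1)) <= X.
  have E : X = X / (2 * (Z + 1)) * (2 * (Z + 1)) by field; lra.
  rewrite {1}E; apply Rmult_le_compat_r; lra.
nra.
Qed.

Lemma Rbar_le_Fin a b : Rbar_le (Fin a) (Fin b) -> a <= b.
Proof. by []. Qed.
Arguments Rbar_le_Fin {a b}.

Section Anal.
Context {n : nat} {F : vec n -> R} {gradF : vec n -> vec n} {L : R}.
Hypotheses (Fconv : convex F) (Fgrad : is_gradient F gradF) (Lpos : 0 < L)
  (Flip : lipschitz gradF L).

Lemma vadd_comb (u v : vec n) l :
  vadd (vscal l v) (vscal (1 - l) u) = vadd u (vscal l (vsub v u)).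
Proof. apply functional_extensionality => i; rewrite /vadd /vscal /vsub; ring. Qed.

Lemma grad_ineq u v : F u + inner (gradF u) (vsub v u) <= F v.
Proof.
set d := vsub v u.
have Hd := norm_nonneg d.
suff : F u + inner (gradF u) d - F v <= 0 by lra.
apply (small_l _ (norm d + 1)); first lra.
move=> e [He0 He1].
have [del [Hdel Hh]] := Fgrad u e He0.
pose l := Rmin (1/2) (del / (2 * (norm d + 1))).
have Hl1 : l <= 1/2 by apply Rmin_l.
have Hl2 : l <= del / (2 * (norm d + 1)) by apply Rmin_r.
have Hl0 : 0 < l.
  rewrite /l; apply Rmin_glb_lt; [lra|]. apply Rdiv_lt_0_compat; lra.
have Hnh : norm (vscal l d) = l * norm d by rewrite norm_scal Rabs_pos_eq; lra.
have Hlt : norm (vscal l d) < del.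
  rewrite Hnh.
  have : l * (2 * (norm d + 1)) <= del.
    have E : del = del / (2 * (norm d + 1)) * (2 * (norm d + 1)) by field; lra.
    rewrite {1}E; apply Rmult_le_compat_r; lra.
  nra.
have H1 := Hh _ Hlt.
have Hl : 0 <= l <= 1 by lra.
have H2 := Fconv v u l Hl.
rewrite vadd_comb -/d in H2.
rewrite inner_scalr Hnh in H1.
have H3 := Rle_abs (- (F (vadd u (vscal l d)) - F u - l * inner (gradF u) d)).
rewrite Rabs_Ropp in H3.
have : l * (F u + inner (gradF u) d - F v) <= l * (e * (norm d + 1)) by nra.
move=> H4; apply Rmult_le_reg_l in H4 => //; lra.
Qed.

Lemma lip_nsq a b : nsq (vsub (gradF a) (gradF b)) <= L * L * nsq (vsub a b).
Proof.
have H := Flip a b. have H0 := norm_nonneg (vsub (gradF a) (gradF b)).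
rewrite -!norm_sq /=. nra.
Qed.

Lemma lip_inner a b d : inner (vsub (gradF a) (gradF b)) d <= L * norm (vsub a b) * norm d.
Proof.
apply: Rle_trans; first apply cs.
apply Rmult_le_compat_r; [apply norm_nonneg| apply Flip].
Qed.

Lemma grad_mono a b : 0 <= inner (vsub (gradF a) (gradF b)) (vsub a b).
Proof.
have H1 := grad_ineq a b. have H2 := grad_ineq b a.
move: H1 H2; expand. lra.
Qed.

Lemma descent y z : F z <= F y + inner (gradF y) (vsub z y) + L * nsq (vsub z y).
Proof.
have H1 := grad_ineq z y.
have H2 := lip_inner z y (vsub z y).
rewrite -/(norm (vsub z y)) in H2.
have : norm (vsub z y) * norm (vsub z y) = nsq (vsub z y) by rewrite -norm_sq /=; ring.
move: H1 H2; expand. move=> H1 H2 H3.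
rewrite (inner_sym (gradF z) y) (inner_sym (gradF z) z) (inner_sym (gradF y) y) (inner_sym (gradF y) z) in H1 H2 *.
nra.
Qed.

End Anal.

Lemma Rabs_m1 : Rabs (-1) = 1.
Proof. by rewrite Rabs_Ropp Rabs_R1. Qed.

Lemma cs_abs {n} (u v : vec n) : Rabs (inner u v) <= norm u * norm v.
Proof.
apply Rabs_le; split; last by apply cs.
have H := cs u (vscal (-1) v). rewrite inner_scalr norm_scal Rabs_m1 in H. lra.
Qed.

Lemma norm_sym {n} (u v : vec n) : norm (vsub u v) = norm (vsub v u).
Proof.
have -> : vsub u v = vscal (-1) (vsub v u).
  apply functional_extensionality => i; rewrite /vsub /vscal; ring.
by rewrite norm_scal Rabs_m1 Rmult_1_l.
Qed.

Lemma norm_tri3 {n} (u v w : vec n) : norm (vsub u w) <= norm (vsub u v) + norm (vsub v w).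
Proof.
have -> : vsub u w = vadd (vsub u v) (vsub v w).
  apply functional_extensionality => i; rewrite /vsub /vadd; ring.
apply norm_triangle.
Qed.

Lemma norm_lt_of_nsq {n} (u : vec n) r : 0 < r -> nsq u < r * r -> norm u < r.
Proof.
move=> Hr H. rewrite /norm -(sqrt_square r); last lra.
apply sqrt_lt_1_alt; split => //; apply nsq_nonneg.
Qed.

Lemma vec_eq_small {n} (u v : vec n) : (forall e, 0 < e -> norm (vsub u v) < e) -> u = v.
Proof.
move=> H.
have H0 : norm (vsub u v) = 0.
  apply Rle_antisym; last apply norm_nonneg.
  apply Rnot_lt_le => Hp. have := H _ Hp. lra.
have : nsq (vsub u v) = 0 by rewrite -norm_sq H0 /=; ring.
move/nsq_eq0 => E. apply functional_extensionality => i.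
have := f_equal (fun f => f i) E. rewrite /vsub /=. lra.
Qed.

Lemma vconv_ev {n} (u : nat -> vec n) l : vconv u l ->
  forall e, 0 < e -> exists N, forall k, (N <= k)%nat -> norm (vsub (u k) l) < e.
Proof.
move=> H e He. have [N HN] := H e He. exists N => k Hk.
have := HN k (elimT leP Hk). rewrite /Rdist Rminus_0_r Rabs_pos_eq //; apply norm_nonneg.
Qed.

Lemma phi_ge (phi : nat -> nat) : (forall k, (phi k < phi (S k))%nat) -> forall k, (k <= phi k)%nat.
Proof.
move=> H; elim => [|k IH] //. apply: leq_ltn_trans IH (H k).
Qed.

Fixpoint sumR (f : nat -> R) (N : nat) : R :=
  match N with O => 0 | S N' => sumR f N' + f N' end.

Lemma sumR_mono f i j : (forall t, 0 <= f t) -> (i <= j)%nat -> sumR f i <= sumR f j.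
Proof.
move=> Hf /subnK <-. elim: (j - i)%nat => [|d IH] /=; first by rewrite add0n; lra.
rewrite ?addSn /=. have := Hf (d + i)%nat. lra.
Qed.

Lemma tail_small f B : (forall t, 0 <= f t) -> (forall T, sumR f T <= B) ->
  forall e, 0 < e -> exists N0, forall N, (N0 <= N)%nat -> sumR f N - sumR f N0 < e.
Proof.
move=> Hf HB e He.
have Hg : Un_growing (sumR f) by move=> k /=; have := Hf k; lra.
have Hb : has_ub (sumR f) by exists B => r [i ->]; apply HB.
have [l Hl] := growing_cv _ Hg Hb.
have [N0 HN0] := Hl e He. exists N0 => N HN.
have H1 := growing_ineq _ _ Hg Hl N.
have := HN0 N0 (le_n _). rewrite /Rdist. move/Rabs_def2 => [H2 H3]. lra.
Qed.

Lemma term_small f B : (forall t, 0 <= f t) -> (forall T, sumR f T <= B) ->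
  forall e, 0 < e -> exists N0, forall t, (N0 <= t)%nat -> f t < e.
Proof.
move=> Hf HB e He. have [N0 HN0] := tail_small _ _ Hf HB e He. exists N0 => t Ht.
have := HN0 t.+1 (leqW Ht). have := sumR_mono _ _ _ Hf Ht. rewrite /=. lra.
Qed.

Lemma sum_lower f c N0 N : (N0 <= N)%nat -> (forall t, (N0 <= t)%nat -> (t < N)%nat -> c <= f t) ->
  INR (N - N0) * c <= sumR f N - sumR f N0.
Proof.
move=> /subnK <-. elim: (N - N0)%nat => [|d IH] H.
  rewrite add0n subnn /=. lra.
rewrite addSn /= subSn; last by rewrite leq_addl.
rewrite addnK in IH *. rewrite S_INR.
have : c <= f (d + N0)%nat by apply H; [rewrite leq_addl| rewrite ltnS].

have : INR d * c <= sumR f (d + N0) - sumR f N0.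
  apply IH => t H1 H2; apply H => //. by rewrite addSn ltnS ltnW.
lra.
Qed.

Lemma Fcont {n} {F : vec n -> R} {gradF : vec n -> vec n} : is_gradient F gradF ->
  forall u e, 0 < e -> exists rho, 0 < rho /\
    forall w, norm (vsub w u) < rho -> Rabs (F w - F u) < e.
Proof.
move=> Fg u e He.
have [d [Hd Hh]] := Fg u 1 Rlt_0_1.
set K := norm (gradF u) + 1.
have HK : 0 < K by rewrite /K; have := norm_nonneg (gradF u); lra.
exists (Rmin d (e / K)); split.
  apply Rmin_glb_lt => //. apply Rdiv_lt_0_compat; lra.
move=> w Hw.
have Hw1 : norm (vsub w u) < d by apply: Rlt_le_trans Hw (Rmin_l _ _).
have Hw2 : norm (vsub w u) < e / K by apply: Rlt_le_trans Hw (Rmin_r _ _).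
have H := Hh _ Hw1.
rewrite (_ : vadd u (vsub w u) = w) in H; last first.
  apply functional_extensionality => i; rewrite /vadd /vsub; ring.
have H2 := cs_abs (gradF u) (vsub w u).
have H3 : K * norm (vsub w u) < e.
  have -> : e = K * (e / K) by field; lra.
  apply Rmult_lt_compat_l => //.
have Hn := norm_nonneg (vsub w u).
rewrite /K in H3.
have Ha := Rabs_triang (F w - F u - inner (gradF u) (vsub w u)) (inner (gradF u) (vsub w u)).
have -> : F w - F u = F w - F u - inner (gradF u) (vsub w u) + inner (gradF u) (vsub w u) by ring.
lra.
Qed.

Lemma wscalar (k L g a e1 e2 p q a1 b yy yg gg : R) :
  0 < k -> 0 < L -> 0 < g -> 0 <= a <= 1 ->
  q = (1 + a) * ((1 + a) * yy) + (1 + a) * (g * yg) + g * ((1 + a) * yg) + g * (g * gg) ->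
  e2 - e1 <= k * (- / 2 * a1 - / 4 * p + / 4 * ((1 + a) * a1 + g * b)) + L / 4 * p ->
  - ((1 + a) * a1 + g * b) <= (p + q) / 2 ->
  2 * b <= L / (1 + a) * p + (1 + a) / L * gg ->
  gg <= L * L * yy ->
  0 <= yg ->
  2 * ((1 + a) * yy + g * yg) <= / (1 + a) * q + (1 + a) * yy ->
  let A := k / 4 * ((1 - a) / (2 * (1 + a)) + g * L / ((1 + a) * (1 + a))) in
  let kap := k / 4 - 2 * A - L / 4 in
  e2 + A * p <= e1 + A * q - kap * p.
Proof.
move=> Hk HL Hg Ha Hq Hgap Hii Hiii Hiv Hv Hvi A kap.
have Ha1 : 0 < 1 + a by lra.
have Hyy : yy <= q / ((1 + a) * (1 + a)).
  have H1 : (1 + a) * yy <= / (1 + a) * q by nra.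
  apply (Rmult_le_reg_l ((1 + a) * (1 + a))); first nra.
  have -> : (1 + a) * (1 + a) * (q / ((1 + a) * (1 + a))) = q by field; lra.
  have E : (1 + a) * ((1 + a) * yy) <= (1 + a) * (/ (1 + a) * q) by apply Rmult_le_compat_l; lra.
  rewrite (_ : (1 + a) * (/ (1 + a) * q) = q) in E; last by field; lra.
  lra.
have Hb : b <= L * (p + q) / (2 * (1 + a)).
  have H1 : (1 + a) / L * gg <= (1 + a) / L * (L * L * yy).
    apply Rmult_le_compat_l => //. apply Rmult_le_pos; [lra| apply Rlt_le, Rinv_0_lt_compat; lra].
  have H2 : (1 + a) / L * (L * L * yy) <= (1 + a) / L * (L * L * (q / ((1 + a) * (1 + a)))).
    apply Rmult_le_compat_l; [apply Rmult_le_pos; [lra| apply Rlt_le, Rinv_0_lt_compat; lra]|].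
    apply Rmult_le_compat_l; nra.
  rewrite (_ : (1 + a) / L * (L * L * (q / ((1 + a) * (1 + a)))) = L / (1 + a) * q) in H2; last by field; lra.
  have -> : L * (p + q) / (2 * (1 + a)) = / 2 * (L / (1 + a) * p + L / (1 + a) * q) by field; lra.
  lra.
set a2 := (1 + a) * a1 + g * b in Hgap Hii.
have Ea : - / 2 * a1 - / 4 * p + / 4 * a2 = - ((1 - a) / (4 * (1 + a))) * a2 + g / (2 * (1 + a)) * b - / 4 * p.
  rewrite /a2; field; lra.
rewrite Ea in Hgap. clearbody a2.
have T1 : k * (- ((1 - a) / (4 * (1 + a))) * a2) <= k * ((1 - a) / (4 * (1 + a))) * ((p + q) / 2).
  have Hc : 0 <= k * ((1 - a) / (4 * (1 + a))).
    apply Rmult_le_pos; [lra| apply Rmult_le_pos; [lra| apply Rlt_le, Rinv_0_lt_compat; lra]].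
  have := Rmult_le_compat_l _ _ _ Hc Hii. lra.
have T2 : k * (g / (2 * (1 + a)) * b) <= k * (g / (2 * (1 + a))) * (L * (p + q) / (2 * (1 + a))).
  have Hc : 0 <= k * (g / (2 * (1 + a))).
    apply Rmult_le_pos; [lra| apply Rmult_le_pos; [lra| apply Rlt_le, Rinv_0_lt_compat; lra]].
  have := Rmult_le_compat_l _ _ _ Hc Hb. lra.
have EA : k * ((1 - a) / (4 * (1 + a))) * ((p + q) / 2) + k * (g / (2 * (1 + a))) * (L * (p + q) / (2 * (1 + a))) = A * (p + q).
  rewrite /A; field; lra.
rewrite /kap.
have : e2 - e1 <= A * (p + q) - k / 4 * p + L / 4 * p.
  rewrite -EA. have E3 : k * (- ((1 - a) / (4 * (1 + a))) * a2 + g / (2 * (1 + a)) * b - / 4 * p) = k * (- ((1 - a) / (4 * (1 + a))) * a2) + k * (g / (2 * (1 + a)) * b) - k / 4 * p by field; lra.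
  lra.
lra.
Qed.

Section Steps.
Variables (n : nat) (F : vec n -> R) (gradF : vec n -> vec n) (G : vec n -> Rbar) (L gamma : R).
Hypotheses (Fconv : convex F) (Fgrad : is_gradient F gradF) (Lpos : 0 < L)
  (Flip : lipschitz gradF L) (Gprop : proper_fun G) (Gconv : convex_ext G)
  (gpos : 0 < gamma) (gsmall : gamma < / (12 * L)).

Lemma gL : gamma * L < / 12.
Proof.
have H : gamma * (12 * L) < 1.
  have E : 1 = / (12 * L) * (12 * L) by field; lra.
  rewrite E; apply Rmult_lt_compat_r; lra.
lra.
Qed.

Lemma gL' : 12 * (L * gamma) < 1.
Proof. have := gL. lra. Qed.

Lemma yopt (x y : vec n) :
  is_argmin (fun v => Fin (F v + 5 * L / 2 * norm v ^ 2
                              + / (2 * gamma) * norm (vsub v x) ^ 2)) y ->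
  x = vadd (vscal (1 + 5 * L * gamma) y) (vscal gamma (gradF y)).
Proof.
move=> Hmin.
set r := vsub (vadd (vadd (gradF y) (vscal (5 * L) y)) (vscal (/ gamma) y)) (vscal (/ gamma) x).
have Erdef : r = vsub (vadd (vadd (gradF y) (vscal (5 * L) y)) (vscal (/ gamma) y)) (vscal (/ gamma) x) by [].
clearbody r.
set C := L + 5 * L / 2 + / (2 * gamma).
have HC : 0 <= C by rewrite /C; have := Rinv_0_lt_compat (2 * gamma); lra.
have Hr : nsq r <= 0.
  apply (small_l _ (C * nsq r)); first by have := nsq_nonneg r; nra.
  move=> l [Hl0 Hl1].
  have H := Rbar_le_Fin (Hmin (vsub y (vscal l r))).
  have Hd := descent Fconv Fgrad Lpos Flip y (vsub y (vscal l r)).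
  have Ev : vsub (vsub y (vscal l r)) y = vscal (- l) r.
    apply functional_extensionality => i; rewrite /vsub /vscal; ring.
  have Ew : vsub (vsub y (vscal l r)) x = vsub (vsub y x) (vscal l r).
    apply functional_extensionality => i; rewrite /vsub /vscal; ring.
  rewrite Ev in Hd. rewrite Ew in H.
  have Er : nsq r = inner (gradF y) r + 5 * L * inner y r + / gamma * inner y r - / gamma * inner x r.
    rewrite /nsq {1}Erdef. expand. ring.
  move: H Hd. expand. rewrite !(inner_sym r). move=> H Hd.
  have Hig : / (2 * gamma) = / 2 * / gamma by field; lra.
  rewrite Hig in H. rewrite /nsq in Er.
  have Er' : l * inner r r = l * (inner (gradF y) r + 5 * L * inner y r + / gamma * inner y r - / gamma * inner x r) by rewrite Er.
  have : l * inner r r <= l * (l * (C * inner r r)).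
    rewrite /C Hig. lra.
  move=> H2; apply Rmult_le_reg_l in H2 => //.
have Hr0 := nsq_eq0 _ (Rle_antisym _ _ Hr (nsq_nonneg r)).
apply functional_extensionality => i.
have := f_equal (fun f => f i) Hr0. rewrite Erdef /vsub /vadd /vscal /= => Ei.
have E2 : gamma * (gradF y i + 5 * L * y i + / gamma * y i - / gamma * x i) = 0 by rewrite Ei; ring.
have E3 : gamma * (gradF y i + 5 * L * y i + / gamma * y i - / gamma * x i)
  = gamma * gradF y i + 5 * L * gamma * y i + y i - x i by field; lra.
lra.
Qed.
Definition Gr (v : vec n) : R := match G v with Fin r => r | Pinf => 0 end.
Definition svec (x y z : vec n) : vec n :=
  vadd (vscal (/ gamma) (vsub (vsub (vscal 2 y) x) z)) (vscal (5 * L) z).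

Lemma zopt (x y z : vec n) :
  is_argmin (fun v => Rbar_plus_R (G v)
                   (- (5 * L / 2) * norm v ^ 2
                    + / (2 * gamma) * norm (vsub (vsub (vscal 2 y) x) v) ^ 2)) z ->
  G z = Fin (Gr z) /\
  forall v gv, G v = Fin gv -> Gr z + inner (svec x y z) (vsub v z) <= gv.
Proof.
move=> Hmin.
have Hz : G z = Fin (Gr z).
  case: Gprop => x0 [r0 Hx0]. have := Hmin x0. rewrite Hx0 /Gr.
  by case: (G z).
split => // v gv Hv.
set d := vsub v z.
set C := / (2 * gamma) - 5 * L / 2.
have HC : 0 <= C.
  have H12 := gL. rewrite /C.
  have : 5 * L / 2 * (2 * gamma) < 1 by nra.
  move=> H1.
  have : 5 * L / 2 <= / (2 * gamma); last lra.
  apply (Rmult_le_reg_r (2 * gamma)); first lra.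
  rewrite Rinv_l; lra.
suff : Gr z + inner (svec x y z) d - gv <= 0 by lra.
apply (small_l _ (C * nsq d)); first by have := nsq_nonneg d; nra.
move=> l [Hl0 Hl1].
have Hl : 0 <= l <= 1 by lra.
have Hc := Gconv v z l gv (Gr z) Hl Hv Hz.
have H := Hmin (vadd (vscal l v) (vscal (1 - l) z)).
move: Hc H; case: (G (vadd (vscal l v) (vscal (1 - l) z))) => [gp|] // Hc H.
have {}Hc := Rbar_le_Fin Hc.
rewrite Hz in H. have {}H := Rbar_le_Fin H.
rewrite vadd_comb -/d in H.
clearbody d.
have Ew : vsub (vsub (vscal 2 y) x) (vadd z (vscal l d)) = vsub (vsub (vsub (vscal 2 y) x) z) (vscal l d).
  apply functional_extensionality => i; rewrite /vsub /vadd /vscal; ring.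
rewrite Ew /svec in H *. move: H.
generalize (vsub (vsub (vscal 2 y) x) z) => e H.
have Hig : / (2 * gamma) = / 2 * / gamma by field; lra.
rewrite /C Hig in H *. move: H. expand. rewrite !(inner_sym d). move=> H.
have : l * (Gr z + (/ gamma * inner e d + 5 * L * inner z d) - gv) <= l * (l * ((/ 2 * / gamma - 5 * L / 2) * inner d d)) by lra.
move=> H2; apply Rmult_le_reg_l in H2 => //.
Qed.

Variables (x y z : nat -> vec n).
Hypothesis Hit : forall t : nat,
     is_argmin (fun v => Fin (F v + 5 * L / 2 * norm v ^ 2
                              + / (2 * gamma) * norm (vsub v (x t)) ^ 2)) (y (S t)) /\
     is_argmin (fun v => Rbar_plus_R (G v)
                   (- (5 * L / 2) * norm v ^ 2
                    + / (2 * gamma) * norm (vsub (vsub (vscal 2 (y (S t))) (x t)) v) ^ 2))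
               (z (S t)) /\
     x (S t) = vadd (x t) (vscal 2 (vsub (z (S t)) (y (S t)))).

Definition al := 5 * L * gamma.
Definition cc := 1 - al.
Definition kk := cc / gamma.
Definition E t := Gr (z t) + F (z t).

Lemma HY t : x t = vadd (vscal (1 + al) (y (S t))) (vscal gamma (gradF (y (S t)))).
Proof. have [H _] := Hit t. exact: yopt H. Qed.
Lemma HX t : x (S t) = vadd (x t) (vscal 2 (vsub (z (S t)) (y (S t)))).
Proof. by have [_ [_ H]] := Hit t. Qed.
Lemma HZ t : G (z (S t)) = Fin (Gr (z (S t))) /\
  forall v gv, G v = Fin gv -> Gr (z (S t)) + inner (svec (x t) (y (S t)) (z (S t))) (vsub v (z (S t))) <= gv.
Proof. have [_ [H _]] := Hit t. exact: zopt H. Qed.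

Lemma svec_eq t : svec (x t) (y (S t)) (z (S t)) =
  vsub (vscal kk (vsub (y (S t)) (z (S t)))) (gradF (y (S t))).
Proof.
rewrite /svec {1}(HY t). apply functional_extensionality => i.
rewrite /vsub /vadd /vscal /kk /cc /al. field. lra.
Qed.

Lemma gap t u gu : G u = Fin gu ->
  E (S t) - gu - F u <= kk * inner (vsub (y (S t)) (z (S t))) (vsub (z (S t)) u)
     + L * nsq (vsub (z (S t)) (y (S t))).
Proof.
move=> Hu.
have [_ H1] := HZ t. have {}H1 := H1 u gu Hu.
have H2 := descent Fconv Fgrad Lpos Flip (y (S t)) (z (S t)).
have H3 := grad_ineq Fconv Fgrad (y (S t)) u.
rewrite svec_eq in H1. rewrite /E.
move: H1 H2 H3. set Y := y (S t). set Z := z (S t). set g := gradF Y.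
generalize kk => k.
rewrite /nsq.
generalize (inner (vsub Z Y) (vsub Z Y)) => NN.
expand.
rewrite ?(inner_sym Z Y) ?(inner_sym u Y) ?(inner_sym u Z) ?(inner_sym Z u) ?(inner_sym Y u).
move=> *. lra.
Qed.

Definition Kf := / (40 * gamma * L) * (/ gamma - 5 * L).

Lemma fejer t zb xb gb : G zb = Fin gb ->
  (forall v gv, G v = Fin gv -> gb - inner (gradF zb) (vsub v zb) <= gv) ->
  xb = vadd (vscal (1 + al) zb) (vscal gamma (gradF zb)) ->
  E (S t) - (gb + F zb) <= Kf * (nsq (vsub (x t) xb) - nsq (vsub (x (S t)) xb)).
Proof.
move=> Hgb Hsub Hfix.
have Hg := gap t zb gb Hgb.
have [HzF Hs] := HZ t. have H1 := Hs zb gb Hgb. rewrite svec_eq in H1.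
have H2 := Hsub (z (S t)) _ HzF.
have Hm := grad_mono Fconv Fgrad (y (S t)) zb.
set Y := y (S t) in Hg H1 H2 Hm *. set Z := z (S t) in Hg H1 H2 Hm HzF *.
set gY := gradF Y in H1 Hm *. set gU := gradF zb in H2 Hm Hfix *.
set Mv := inner (vsub (vscal kk (vsub Y Z)) gY) (vsub Z zb) + inner gU (vsub Z zb).
have HMv : 0 <= Mv.
  rewrite /Mv. move: H1 H2. expand. move=> *. lra.
set Mo := inner (vsub gY gU) (vsub Y zb).
set eta := (1 - al) / (2 * al).
set D4 := cc / (2 * gamma) - L.
have Hal : 0 < al by rewrite /al; nra.
have HgL := gL'.
have Heta : 0 <= eta.
  rewrite /eta; apply Rmult_le_pos; [rewrite /al; lra| apply Rlt_le, Rinv_0_lt_compat; lra].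
have HD4 : 0 <= D4.
  rewrite /D4 /cc /al.
  have -> : (1 - 5 * L * gamma) / (2 * gamma) - L = (1 - 7 * L * gamma) / (2 * gamma) by field; lra.
  apply Rmult_le_pos; [lra| apply Rlt_le, Rinv_0_lt_compat; lra].
have Eq : Kf * (nsq (vsub (x t) xb) - nsq (vsub (x (S t)) xb)) =
   kk * inner (vsub Y Z) (vsub Z zb) + L * nsq (vsub Z Y) + eta * (Mo + Mv) + D4 * nsq (vsub Z Y).
  rewrite (HX t) (HY t) Hfix -/Y -/Z -/gY /Mo /Mv /eta /D4 /kk /Kf /cc /al.
  clearbody Mo Mv eta D4 gU gY Z Y.
  expand.
  rewrite ?(inner_sym Z Y) ?(inner_sym zb Y) ?(inner_sym gY Y) ?(inner_sym gU Y)
    ?(inner_sym zb Z) ?(inner_sym gY Z) ?(inner_sym gU Z) ?(inner_sym gY zb) ?(inner_sym gU zb)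
    ?(inner_sym gU gY).
  field. lra.
have := Rmult_le_pos _ _ Heta (Rplus_le_le_0_compat _ _ Hm HMv).
have := Rmult_le_pos _ _ HD4 (nsq_nonneg (vsub Z Y)).
rewrite -/Mo. lra.
Qed.

Definition dl t := vsub (x (S t)) (x t).
Definition Aw := kk / 4 * ((1 - al) / (2 * (1 + al)) + gamma * L / ((1 + al) * (1 + al))).
Definition kap := kk / 4 - 2 * Aw - L / 4.

Lemma al_bounds : 0 < al < 1.
Proof. have := gL'. rewrite /al. nra. Qed.
Lemma kk_pos : 0 < kk.
Proof. have := al_bounds. rewrite /kk /cc => ?. apply Rdiv_lt_0_compat; lra. Qed.

Lemma wstep t : E (S (S t)) + Aw * nsq (dl (S t)) <= E (S t) + Aw * nsq (dl t) - kap * nsq (dl (S t)).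
Proof.
have [HzF _] := HZ t.
have Hg := gap (S t) (z (S t)) _ HzF.
have Hal := al_bounds. have Hk := kk_pos.
set Y1 := y (S t) in Hg *. set Y2 := y (S (S t)) in Hg *.
set Z1 := z (S t) in Hg HzF *. set Z2 := z (S (S t)) in Hg *.
set dy := vsub Y2 Y1. set dg := vsub (gradF Y2) (gradF Y1). set D := dl (S t).
have Edt : dl t = vadd (vscal (1 + al) dy) (vscal gamma dg).
  rewrite /dl /dy /dg (HY (S t)) (HY t). apply functional_extensionality => i.
  rewrite /vsub /vadd /vscal -/Y1 -/Y2. clearbody Y1 Y2 Z1 Z2 dy dg D. ring.
have Hx1 := HX (S t). have Hx0 := HX t.
have ED : vsub Y2 Z2 = vscal (- / 2) D.
  rewrite /D /dl Hx1. apply functional_extensionality => i.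
  rewrite /vsub /vadd /vscal -/Y2 -/Z2. clearbody Y1 Y2 Z1 Z2 dy dg D. field.
have ED' : vsub Z2 Y2 = vscal (/ 2) D.
  rewrite /D /dl Hx1. apply functional_extensionality => i.
  rewrite /vsub /vadd /vscal -/Y2 -/Z2. clearbody Y1 Y2 Z1 Z2 dy dg D. field.
have EZ : vsub Z2 Z1 = vadd dy (vscal (/ 2) (vsub D (dl t))).
  rewrite /D /dl Hx1 Hx0 /dy. apply functional_extensionality => i.
  rewrite /vsub /vadd /vscal -/Y2 -/Z2 -/Y1 -/Z1. clearbody Y1 Y2 Z1 Z2 dy dg D. field.
rewrite ED ED' EZ Edt in Hg.
have Hii := nsq_nonneg (vadd D (dl t)). rewrite Edt in Hii.
have Hiii := amgm D dg (L / (1 + al)) ltac:(apply Rdiv_lt_0_compat; lra).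
have Hiv := lip_nsq Flip Y2 Y1. rewrite -/dg -/dy in Hiv.
have Hv := grad_mono Fconv Fgrad Y2 Y1. rewrite -/dg -/dy in Hv.
have Hvi := amgm (dl t) dy (/ (1 + al)) ltac:(apply Rinv_0_lt_compat; lra).
rewrite Rinv_inv Edt in Hvi.
have Hrel : / (L / (1 + al)) = (1 + al) / L by field; lra.
rewrite Hrel in Hiii.
clearbody dy dg D.
have W := wscalar kk L gamma al (E (S t)) (E (S (S t))) (nsq D) (nsq (dl t)) (inner D dy) (inner D dg)
   (inner dy dy) (inner dy dg) (inner dg dg) Hk Lpos gpos (conj (Rlt_le _ _ (proj1 Hal)) (Rlt_le _ _ (proj2 Hal))).
rewrite /Aw /kap. apply: W.
- rewrite Edt /nsq. expand. rewrite (inner_sym dg dy). ring.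
- rewrite /E -/Z1. move: Hg. rewrite /E /nsq. expand. move=> Hg. lra.
- move: Hii. rewrite Edt /nsq. expand. rewrite ?(inner_sym dy D) ?(inner_sym dg D) ?(inner_sym dg dy). move=> H. lra.
- move: Hiii. rewrite /nsq. move=> H. lra.
- move: Hiv. rewrite /nsq. move=> H. lra.
- move: Hv. rewrite (inner_sym dg dy). move=> H. lra.
- move: Hvi. rewrite Edt /nsq. expand. rewrite ?(inner_sym dg dy). move=> H. lra.
Qed.

Lemma subgrad_min zb gb : G zb = Fin gb ->
  (forall v gv, G v = Fin gv -> gb + F zb <= gv + F v) ->
  forall v gv, G v = Fin gv -> gb - inner (gradF zb) (vsub v zb) <= gv.
Proof.
move=> Hzb Hmin v gv Hv.
suff : gb - inner (gradF zb) (vsub v zb) - gv <= 0 by lra.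
set d := vsub v zb.
apply (small_l _ (L * nsq d)); first by have := nsq_nonneg d; nra.
move=> l [Hl0 Hl1]. have Hl : 0 <= l <= 1 by lra.
have Hc := Gconv v zb l gv gb Hl Hv Hzb.
move: Hc. case E: (G (vadd (vscal l v) (vscal (1 - l) zb))) => [gp|] // Hc.
have {}Hc := Rbar_le_Fin Hc.
have H := Hmin _ _ E.
rewrite vadd_comb -/d in H.
have Hd := descent Fconv Fgrad Lpos Flip zb (vadd zb (vscal l d)).
rewrite (_ : vsub (vadd zb (vscal l d)) zb = vscal l d) in Hd; last first.
  apply functional_extensionality => i; rewrite /vsub /vadd /vscal; ring.
move: Hd. rewrite /nsq !inner_scalr !inner_scall => Hd.
have : l * (gb - inner (gradF zb) d - gv) <= l * (l * (L * inner d d)) by lra.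
move=> H2; apply Rmult_le_reg_l in H2 => //.
Qed.

Lemma kap_pos : 0 < kap.
Proof.
have H := gL'. have Hal := al_bounds.
have E : kap = (gamma * L) * (7 - 275 * ((gamma * L) * (gamma * L))) / (4 * gamma * ((1 + al) * (1 + al))).
  rewrite /kap /Aw /kk /cc /al. field. split; [rewrite /al in Hal; lra| lra].
rewrite E.
have Hp : 0 < gamma * L by nra.
have Hq : gamma * L < / 12 by have := gL; lra.
have H1 : 0 < 7 - 275 * ((gamma * L) * (gamma * L)) by nra.
have H2 : 0 < (1 + al) * (1 + al) by nra.
apply Rdiv_lt_0_compat; apply Rmult_lt_0_compat => //. lra.
Qed.

Lemma Aw_nonneg : 0 <= Aw.
Proof.
have Hal := al_bounds. have Hk := kk_pos.
rewrite /Aw. apply Rmult_le_pos; first lra.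
apply Rplus_le_le_0_compat.
- apply Rmult_le_pos; [lra| apply Rlt_le, Rinv_0_lt_compat; lra].
- apply Rmult_le_pos; [nra| apply Rlt_le, Rinv_0_lt_compat; nra].
Qed.

Lemma Kf_pos : 0 <= Kf.
Proof.
have H := gL'. rewrite /Kf. apply Rmult_le_pos.
- apply Rlt_le, Rinv_0_lt_compat. nra.
- have : 5 * L < / gamma; last lra.
  apply (Rmult_lt_reg_r gamma) => //. rewrite Rinv_l; lra.
Qed.

Definition W t := E (S t) + Aw * nsq (dl t).

Lemma W_step t : W (S t) <= W t - kap * nsq (dl (S t)).
Proof. have := wstep t. rewrite /W. lra. Qed.

Lemma W_mono i j : (i <= j)%nat -> W j <= W i.
Proof.
move=> /subnK <-. elim: (j - i)%nat => [|d IH]; first by rewrite add0n; lra.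
rewrite addSn. have := W_step (d + i). have := kap_pos. have := nsq_nonneg (dl (d + i).+1). nra.
Qed.

Lemma W_sum T : kap * sumR (fun t => nsq (dl (S t))) T <= W 0 - W T.
Proof.
elim: T => [|T IH] /=; first lra.
have := W_step T. lra.
Qed.

Lemma dl_eq j : dl j = vscal 2 (vsub (z (S j)) (y (S j))).
Proof.
rewrite /dl (HX j). apply functional_extensionality => i; rewrite /vsub /vadd /vscal; ring.
Qed.

Lemma jensen N : (1 <= N)%nat -> exists g', G (zavg z N) = Fin g' /\
   g' + F (zavg z N) <= sumR (fun t => E (S t)) N / INR N.
Proof.
elim: N => [//|N IH] _.
case: (posnP N) => [->|HN].
  have -> : zavg z 1 = z 1.
    apply functional_extensionality => i. rewrite /zavg big_nat1 /=. field.
  have [Hz1 _] := HZ 0. exists (Gr (z 1)); split => //. rewrite /= /E. lra.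
have [g' [Hg' Hle]] := IH HN.
have HNr : 0 < INR N by apply lt_0_INR; apply/ltP.
set l := / INR N.+1.
have Hl : 0 <= l <= 1.
  rewrite /l S_INR; split; first by apply Rlt_le, Rinv_0_lt_compat; lra.
  rewrite -Rinv_1; apply Rinv_le_contravar; lra.
have Ecomb : zavg z N.+1 = vadd (vscal l (z N.+1)) (vscal (1 - l) (zavg z N)).
  apply functional_extensionality => i.
  rewrite /zavg /vadd /vscal /l S_INR big_nat_recr //=. field. lra.
have [HzN _] := HZ N.
have Hc := Gconv (z N.+1) (zavg z N) l (Gr (z N.+1)) g' Hl HzN Hg'.
have HF := Fconv (z N.+1) (zavg z N) l Hl.
rewrite -Ecomb in Hc HF.
move: Hc. case: (G (zavg z N.+1)) => [g''|] // Hc. have {}Hc := Rbar_le_Fin Hc.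
exists g''; split => //.
rewrite /= /E.
have E1 : (sumR (fun t : nat => Gr (z t.+1) + F (z t.+1)) N + (Gr (z N.+1) + F (z N.+1))) / INR N.+1
   = l * (Gr (z N.+1) + F (z N.+1)) + (1 - l) * (sumR (fun t : nat => Gr (z t.+1) + F (z t.+1)) N / INR N).
  rewrite /l S_INR. field. lra.
rewrite E1.
have : (1 - l) * (g' + F (zavg z N)) <= (1 - l) * (sumR (fun t : nat => Gr (z t.+1) + F (z t.+1)) N / INR N).
  apply Rmult_le_compat_l; [lra| exact Hle].
lra.
Qed.

Lemma min_step_le N t : (t <= N)%nat -> min_step x N <= norm (vsub (x (S t)) (x t)).
Proof.
elim: N => [|N IH] Ht /=.
  by move: Ht; rewrite leqn0 => /eqP ->; lra.
move: Ht; rewrite leq_eqVlt => /orP [/eqP ->|Ht]; first by apply Rmin_r.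
apply: Rle_trans (Rmin_l _ _) (IH Ht).
Qed.

Lemma min_step_nonneg N : 0 <= min_step x N.
Proof.
elim: N => [|N IH] /=; first apply norm_nonneg.
apply Rmin_glb => //; apply norm_nonneg.
Qed.

Section Cluster.
Variables (phi : nat -> nat) (yb zb xb : vec n).
Hypotheses (Glsc : lsc G) (Hphi : forall k, (phi k < phi (S k))%nat)
  (Hyc : vconv (fun k => y (phi k)) yb) (Hzc : vconv (fun k => z (phi k)) zb)
  (Hxc : vconv (fun k => x (phi k)) xb).

Lemma phiS k : (0 < k)%nat -> phi k = (phi k).-1.+1.
Proof. move=> Hk. have := phi_ge _ Hphi k. lia. Qed.

Lemma W_lb : exists m, forall t, m <= W t.
Proof.
have [r1 [Hr1 HF]] := Fcont Fgrad zb 1 Rlt_0_1.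
set a := match G zb with Fin r => r - 1 | Pinf => 0 end.
have Ha : ~ Rbar_le (G zb) (Fin a) by rewrite /a; case: (G zb) => [r|] /=; lra.
have [r2 [Hr2 HG]] := Glsc zb a Ha.
have Hr : 0 < Rmin r1 r2 by apply Rmin_glb_lt.
have [N HN] := vconv_ev _ _ Hzc _ Hr.
exists (a + F zb - 1) => t.
set k := (N + t.+1)%nat.
have Hk := phi_ge _ Hphi k.
have Hn := HN k ltac:(rewrite /k; lia).
set j := (phi k).-1.
have Ej : phi k = j.+1 by rewrite /j; lia.
rewrite Ej in Hn.
have [HzF _] := HZ j.
have H1 := HG _ (Rlt_le_trans _ _ _ Hn (Rmin_r _ _)).
rewrite HzF /= in H1.
have H2 := HF _ (Rlt_le_trans _ _ _ Hn (Rmin_l _ _)).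
have H3 : W j <= W t by apply W_mono; rewrite /j; lia.
have H4 := Aw_nonneg. have H5 := nsq_nonneg (dl j).
move: H3. rewrite /W /E. move/Rabs_def2: H2 => [H2 H2']. nra.
Qed.

Lemma sum_bound : exists B, forall T, sumR (fun t => nsq (dl (S t))) T <= B.
Proof.
have [m Hm] := W_lb. exists ((W 0 - m) / kap) => T.
have Hk := kap_pos. have := W_sum T. have := Hm T.
move=> H1 H2. apply (Rmult_le_reg_l kap) => //.
have -> : kap * ((W 0 - m) / kap) = W 0 - m by field; lra.
lra.
Qed.

Lemma small_zy e : 0 < e -> exists N0, forall j, (N0 <= j)%nat -> norm (vsub (z (S j)) (y (S j))) < e.
Proof.
move=> He. have [B HB] := sum_bound.
have He2 : 0 < (2 * e) * (2 * e) by nra.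
have [N0 HN0] := term_small _ _ (fun t => nsq_nonneg _) HB _ He2.
exists N0.+1 => j Hj.
have Ej : j = j.-1.+1 by lia.
have := HN0 j.-1 ltac:(lia). rewrite -Ej => H.
have H2 := norm_lt_of_nsq _ _ (Rmult_lt_0_compat _ _ Rlt_0_2 He) H.
rewrite dl_eq norm_scal Rabs_pos_eq in H2; lra.
Qed.

Lemma pick e : 0 < e -> exists j, norm (vsub (y (S j)) yb) < e /\ norm (vsub (z (S j)) zb) < e /\
   norm (vsub (x (S j)) xb) < e /\ norm (vsub (z (S j)) (y (S j))) < e.
Proof.
move=> He.
have [N1 H1] := vconv_ev _ _ Hyc _ He. have [N2 H2] := vconv_ev _ _ Hzc _ He.
have [N3 H3] := vconv_ev _ _ Hxc _ He. have [N4 H4] := small_zy _ He.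
set k := (N1 + N2 + N3 + N4).+1.
have Hk := phi_ge _ Hphi k.
have Ek : phi k = (phi k).-1.+1 by rewrite /k in Hk *; lia.
exists (phi k).-1.
split; [|split; [|split]].
- rewrite -Ek; apply H1; rewrite /k; lia.
- rewrite -Ek; apply H2; rewrite /k; lia.
- rewrite -Ek; apply H3; rewrite /k; lia.
- apply H4; rewrite /k in Hk *; lia.
Qed.

Lemma yz_eq : yb = zb.
Proof.
apply vec_eq_small => e He.
have He3 : 0 < e / 3 by lra.
have [j [H1 [H2 [_ H4]]]] := pick _ He3.
have T1 := norm_tri3 yb (y (S j)) zb. have T2 := norm_tri3 (y (S j)) (z (S j)) zb.
rewrite norm_sym in H1. rewrite norm_sym in H4. lra.
Qed.

Lemma fixpt : xb = vadd (vscal (1 + al) zb) (vscal gamma (gradF zb)).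
Proof.
have Hal := al_bounds. have HgL := gL'.
apply vec_eq_small => e He.
have He7 : 0 < e / 7 by lra.
have [j [H1 [H2 [H3 H4]]]] := pick _ He7.
rewrite -yz_eq.
set Yj := y (S j) in H1 H4 *.
have Ev : vsub xb (vadd (vscal (1 + al) yb) (vscal gamma (gradF yb))) =
  vadd (vsub xb (x (S j))) (vadd (dl j) (vadd (vscal (1 + al) (vsub Yj yb)) (vscal gamma (vsub (gradF Yj) (gradF yb))))).
  rewrite /dl (HY j) -/Yj. clearbody Yj. apply functional_extensionality => i.
  rewrite /vsub /vadd /vscal. ring.
rewrite Ev.
have T1 := norm_triangle (vsub xb (x (S j))) (vadd (dl j) (vadd (vscal (1 + al) (vsub Yj yb)) (vscal gamma (vsub (gradF Yj) (gradF yb))))).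
have T2 := norm_triangle (dl j) (vadd (vscal (1 + al) (vsub Yj yb)) (vscal gamma (vsub (gradF Yj) (gradF yb)))).
have T3 := norm_triangle (vscal (1 + al) (vsub Yj yb)) (vscal gamma (vsub (gradF Yj) (gradF yb))).
rewrite !norm_scal !Rabs_pos_eq in T3; try lra.
have Hdl : norm (dl j) = 2 * norm (vsub (z j.+1) Yj) by rewrite dl_eq -/Yj norm_scal Rabs_pos_eq //; lra.
have Hl := Flip Yj yb.
rewrite norm_sym in H3.
have := norm_nonneg (vsub Yj yb). have := norm_nonneg (vsub (gradF Yj) (gradF yb)).
have : gamma * L < 1 by lra.
move=> G1 G2 G3.
have : gamma * norm (vsub (gradF Yj) (gradF yb)) <= gamma * L * norm (vsub Yj yb).
  rewrite Rmult_assoc; apply Rmult_le_compat_l; lra.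
have : gamma * L * norm (vsub Yj yb) <= norm (vsub Yj yb) by nra.
have : (1 + al) * norm (vsub Yj yb) <= 2 * (e / 7) by nra.
lra.
Qed.

Lemma zb_le v gv : G v = Fin gv -> Rbar_le (G zb) (Fin (gv + F v - F zb)).
Proof.
move=> Hv.
set T := gv + F v - F zb.
apply NNPP => Hn.
have [eta [Heta Hn2]] : exists eta, 0 < eta /\ ~ Rbar_le (G zb) (Fin (T + eta)).
  move: Hn. case: (G zb) => [r|] /= Hn.
  - exists ((r - T) / 2); split; lra.
  - by exists 1; split; [lra|].
have [r2 [Hr2 HG]] := Glsc zb _ Hn2.
have [r1 [Hr1 HF]] := Fcont Fgrad zb (eta / 2) ltac:(lra).
set Bv := norm (vsub zb v) + 1.
have HBv : 0 < Bv by rewrite /Bv; have := norm_nonneg (vsub zb v); lra.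
have Hk := kk_pos.
set s := Rmin 1 (Rmin r1 (Rmin r2 (eta / (2 * (kk * Bv + L + 1))))).
have Hs0 : 0 < s.
  repeat apply Rmin_glb_lt; try lra. apply Rdiv_lt_0_compat; nra.
have Hs1 : s <= 1 by apply Rmin_l.
have Hs2 : s <= r1 by apply: Rle_trans (Rmin_r _ _) (Rmin_l _ _).
have Hs3 : s <= r2 by apply: Rle_trans (Rmin_r _ _) (Rle_trans _ _ _ (Rmin_r _ _) (Rmin_l _ _)).
have Hs4 : s <= eta / (2 * (kk * Bv + L + 1)).
  apply: Rle_trans (Rmin_r _ _) (Rle_trans _ _ _ (Rmin_r _ _) (Rmin_r _ _)).
have [j [_ [H2 [_ H4]]]] := pick _ Hs0.
have Hgap := gap j v gv Hv.
have [HzF _] := HZ j.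
set Zj := z (S j) in H2 H4 Hgap HzF *. set Yj := y (S j) in H4 Hgap *.
have C1 := cs (vsub Yj Zj) (vsub Zj v).
have C2 := norm_tri3 Zj zb v.
rewrite norm_sym in H4.
have N1 := norm_nonneg (vsub Yj Zj). have N2 := norm_nonneg (vsub Zj v).
have Hns : nsq (vsub Zj Yj) = norm (vsub Yj Zj) * norm (vsub Yj Zj).
  by rewrite -norm_sq norm_sym /=; ring.
have Hb : kk * inner (vsub Yj Zj) (vsub Zj v) + L * nsq (vsub Zj Yj) <= s * (kk * Bv + L).
  rewrite Hns.
  have : norm (vsub Zj v) <= Bv by rewrite /Bv; lra.
  move=> HB.
  have : kk * inner (vsub Yj Zj) (vsub Zj v) <= kk * (s * Bv).
    apply Rmult_le_compat_l; first lra.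
    apply: Rle_trans C1 _. apply Rmult_le_compat; lra.
  have Hnn2 : norm (vsub Yj Zj) * norm (vsub Yj Zj) <= s by nra.
  have : L * (norm (vsub Yj Zj) * norm (vsub Yj Zj)) <= L * s by apply Rmult_le_compat_l; lra.
  lra.
have Hb2 : s * (kk * Bv + L) <= eta / 2.
  have E2 : eta / 2 = (eta / (2 * (kk * Bv + L + 1))) * (kk * Bv + L + 1) by field; nra.
  rewrite E2. apply Rmult_le_compat; nra.
have HFz := HF Zj (Rlt_le_trans _ _ _ H2 Hs2).
move/Rabs_def2: HFz => [HF1 HF2].
have HGz := HG Zj (Rlt_le_trans _ _ _ H2 Hs3).
rewrite HzF /= in HGz.
move: Hgap. rewrite /E /T -/Zj in HGz *. move/Rnot_le_lt: HGz => HGz Hgap. lra.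
Qed.

Lemma zb_fin : G zb = Fin (Gr zb).
Proof.
case: Gprop => v [gv Hv]. have := zb_le _ _ Hv. rewrite /Gr. by case: (G zb).
Qed.

Lemma zb_min v gv : G v = Fin gv -> Gr zb + F zb <= gv + F v.
Proof. move=> Hv. have := zb_le _ _ Hv. rewrite zb_fin /=. lra. Qed.


Lemma fejer_sum N : sumR (fun t => E (S t)) N - INR N * (Gr zb + F zb) <=
  Kf * (nsq (vsub (x 0) xb) - nsq (vsub (x N) xb)).
Proof.
have Hsub := subgrad_min zb (Gr zb) zb_fin (fun v gv Hv => zb_min v gv Hv).
elim: N => [|N IH]; first by rewrite /= Rmult_0_l; lra.
have := fejer N zb xb (Gr zb) zb_fin Hsub fixpt.
rewrite S_INR /=. lra.
Qed.

Lemma main_result : yb = zb /\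
  is_argmin (fun v => Rbar_plus_R (G v) (F v)) zb /\
  (forall N : nat, (1 <= N)%nat ->
     Rbar_le (Rbar_plus_R (G (zavg z N)) (F (zavg z N)))
             (Rbar_plus_R (G zb)
                (F zb + / (40 * gamma * INR N * L) * (/ gamma - 5 * L)
                          * norm (vsub (x 0%nat) xb) ^ 2))) /\
  Un_cv (fun N => sqrt (INR N) * min_step x N) 0.
Proof.
split; first exact yz_eq.
split.
  move=> v. rewrite zb_fin. case E: (G v) => [gv|] //=. exact: zb_min E.
split.
  move=> N HN.
  have [g' [Hg' Hle]] := jensen N HN.
  rewrite Hg' zb_fin.
  change (g' + F (zavg z N) <= Gr zb + (F zb + / (40 * gamma * INR N * L) * (/ gamma - 5 * L) * norm (vsub (x 0) xb) ^ 2)).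
  have HNr : 0 < INR N by apply lt_0_INR; apply/ltP.
  have HS := fejer_sum N.
  have HK := Kf_pos.
  have Hp := nsq_nonneg (vsub (x N) xb).
  rewrite norm_sq.
  have E1 : / (40 * gamma * INR N * L) * (/ gamma - 5 * L) * nsq (vsub (x 0) xb)
     = Kf * nsq (vsub (x 0) xb) / INR N.
    rewrite /Kf. field. lra.
  rewrite E1.
  have : sumR (fun t => E t.+1) N / INR N <= Gr zb + F zb + Kf * nsq (vsub (x 0) xb) / INR N.
    apply (Rmult_le_reg_l (INR N)) => //.
    have -> : INR N * (sumR (fun t => E t.+1) N / INR N) = sumR (fun t => E t.+1) N by field; lra.
    have -> : INR N * (Gr zb + F zb + Kf * nsq (vsub (x 0) xb) / INR N)
      = INR N * (Gr zb + F zb) + Kf * nsq (vsub (x 0) xb) by field; lra.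
    have := Rmult_le_pos _ _ HK Hp. lra.
  lra.
move=> e He.
have [B HB] := sum_bound.
have He2 : 0 < e * e / 4 by nra.
have [N0 HN0] := tail_small _ _ (fun t => nsq_nonneg _) HB _ He2.
exists (2 * N0 + 1)%coq_nat => N HNge.
have HN : (2 * N0 + 1 <= N)%nat by apply/leP.
set m := min_step x N.
have Hm0 : 0 <= m := min_step_nonneg N.
have Hlow := sum_lower (fun t => nsq (dl (S t))) (m * m) N0 N ltac:(lia).
have Hlow' : INR (N - N0) * (m * m) <= sumR (fun t => nsq (dl (S t))) N - sumR (fun t => nsq (dl (S t))) N0.
  apply Hlow => t H1 H2.
  have H3 := min_step_le N t.+1 H2.
  rewrite -/m in H3.
  rewrite -norm_sq /=. rewrite /dl. nra.
have Hup := HN0 N ltac:(lia).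
have HNN : INR N <= 2 * INR (N - N0).
  rewrite minus_INR; last by apply/leP; lia.
  have : INR (2 * N0) <= INR N by apply le_INR; apply/leP; lia.
  rewrite mult_INR /=. lra.
have Hm2 : INR N * (m * m) < e * e.
  have := pos_INR N. have Hmm : 0 <= m * m by nra.
  have : INR N * (m * m) <= 2 * INR (N - N0) * (m * m) by apply Rmult_le_compat_r.
  lra.
rewrite /Rdist Rminus_0_r Rabs_pos_eq; last first.
  apply Rmult_le_pos => //; apply sqrt_pos.
have -> : sqrt (INR N) * m = sqrt (INR N * (m * m)).
  rewrite sqrt_mult; [|apply pos_INR| nra]. by rewrite sqrt_square.
rewrite -(sqrt_square e); last lra.
apply sqrt_lt_1_alt; split => //. apply Rmult_le_pos; [apply pos_INR| nra].
Qed.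
End Cluster.
End Steps.

Theorem theorem4 (n : nat) (F : vec n -> R) (gradF : vec n -> vec n)
  (G : vec n -> Rbar) (L gamma : R)
  (y z x : nat -> vec n) (yb zb xb : vec n) :
  (* assumptions on F *)
  convex F -> is_gradient F gradF -> 0 < L -> lipschitz gradF L ->
  (* assumptions on G (G additionally convex) *)
  proper_fun G -> lsc G -> convex_ext G ->
  (forall (w : vec n) (tau : R), 0 < tau -> exists u : vec n,
     is_argmin (fun v => Rbar_plus_R (Rbar_scal tau (G v)) (/ 2 * norm (vsub v w) ^ 2)) u) ->
  coercive_sum F G ->
  (* step size *)
  0 < gamma < / (12 * L) ->
  (* modified Peaceman-Rachford iteration *)
  (forall t : nat,
     is_argmin (fun v => Fin (F v + 5 * L / 2 * norm v ^ 2
                              + / (2 * gamma) * norm (vsub v (x t)) ^ 2)) (y (S t)) /\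
     is_argmin (fun v => Rbar_plus_R (G v)
                   (- (5 * L / 2) * norm v ^ 2
                    + / (2 * gamma) * norm (vsub (vsub (vscal 2 (y (S t))) (x t)) v) ^ 2))
               (z (S t)) /\
     x (S t) = vadd (x t) (vscal 2 (vsub (z (S t)) (y (S t))))) ->
  cluster_point3 y z x yb zb xb ->
  yb = zb /\
  is_argmin (fun v => Rbar_plus_R (G v) (F v)) zb /\
  (forall N : nat, (1 <= N)%nat ->
     Rbar_le (Rbar_plus_R (G (zavg z N)) (F (zavg z N)))
             (Rbar_plus_R (G zb)
                (F zb + / (40 * gamma * INR N * L) * (/ gamma - 5 * L)
                          * norm (vsub (x 0%nat) xb) ^ 2))) /\
  Un_cv (fun N => sqrt (INR N) * min_step x N) 0.
Proof.
move=> Fc Fg Lp Fl Gp Gl Gc _ _ [g1 g2] Hit [phi [Hphi [Hy [Hz Hx]]]].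
exact: (@main_result n F gradF G L gamma Fc Fg Lp Fl Gp Gc g1 g2 x y z Hit phi yb zb xb Gl Hphi Hy Hz Hx).
Qed.
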